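(* Let $(\mathsf{X},\mu)$, $(\mathsf{Y},\nu)$ be Polish probability spaces (with $d$ a metric on $\mathsf{X}$), $c:\mathsf{X}\times\mathsf{Y}\to[0,\infty)$ continuous, $\pi_\varepsilon$ the $(c,\varepsilon)$-cyclically invariant coupling for each $\varepsilon>0$ (assumed to exist), and assume $\pi_\varepsilon\to\pi_*$ weakly as $\varepsilon\to0$ for some $\pi_*\in\Pi(\mu,\nu)$. Let $\Gamma:=\operatorname{spt}\pi_*$, $\mathsf{X}_0:=\operatorname{proj}_{\mathsf{X}}\Gamma$, $\mathsf{Y}_0:=\operatorname{proj}_{\mathsf{Y}}\Gamma$. Assume: (a) $\Gamma=\operatorname{graph}T$ for a map $T:\mathsf{X}_0\to\mathsf{Y}$; (b) $\mathsf{X}_0$ is arcwise connected, i.e., any two points are connected by a continuous curve in $\mathsf{X}_0$ of finite length; (c) for every compact $K\subset\mathsf{X}_0$, uniformly over $x_1,x_2\in K$, $$|c(x_1,T(x_1))+c(x_2,T(x_2))-c(x_1,T(x_2))-c(x_2,T(x_1))|=o(d(x_1,x_2)).$$ If $(x,y),(x',y')\in\mathsf{X}_0\times\mathsf{Y}_0$ are such that $(x',y),(x,y')\in\Gamma$, then $$I(x,y)+I(x',y')\ge c(x,y)+c(x',y')-c(x,y')-c(x',y).$$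
   Context: $\Pi(\mu,\nu)$ is the set of couplings of $\mu,\nu$ and $P:=\mu\otimes\nu$. A coupling $\pi$ is $(c,\varepsilon)$-cyclically invariant if $\pi\sim P$ and its density admits a version $\frac{d\pi}{dP}:\mathsf{X}\times\mathsf{Y}\to(0,\infty)$ with $\prod_{i=1}^k\frac{d\pi}{dP}(x_i,y_i)=\exp\big(-\frac1\varepsilon[\sum_{i=1}^k c(x_i,y_i)-\sum_{i=1}^k c(x_i,y_{i+1})]\big)\prod_{i=1}^k\frac{d\pi}{dP}(x_i,y_{i+1})$ for all $k$ and points, $y_{k+1}:=y_1$. The function $I$ is $I(x,y):=\sup_{k\ge2}\sup_{(x_i,y_i)_{i=2}^k\subset\Gamma}\sup_{\sigma\in\Sigma(k)}\sum_{i=1}^k c(x_i,y_i)-\sum_{i=1}^k c(x_i,y_{\sigma(i)})$ with $(x_1,y_1):=(x,y)$ and $\Sigma(k)$ the permutations of $\{1,\dots,k\}$. *)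

(* Defs.v *)
From HB Require Import structures.
From mathcomp Require Import all_boot all_order all_algebra.
From mathcomp Require Import all_classical all_reals all_analysis.
From mathcomp Require Import fingroup perm.
Set Implicit Arguments. Unset Strict Implicit. Unset Printing Implicit Defensive.
Import Order.TTheory GRing.Theory Num.Theory.
Import numFieldNormedType.Exports.
Local Open Scope classical_set_scope.
Local Open Scope ring_scope.

(* Metric spaces with a distinguished point (needed by the library to build the
   Borel measurable structure; harmless since X, Y carry probability measures). *)
#[short(type="pmetricType")]
HB.structure Definition PointedMetric (K : numDomainType) :=
  { M of Metric K M & isPointed M }.

Notation borel X := (g_sigma_algebraType (@open X)).

(* Polish space given with a metric d = mdist compatible with its topology
   (ballEmdist in metricType): separable and d-complete. *)
Definition separable_space (X : topologicalType) : Prop :=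
  exists D : set X, countable D /\ closure D = [set: X].

Definition mcomplete {R : realType} (X : pmetricType R) : Prop :=
  forall u : nat -> X,
    (forall e : R, 0 < e -> exists N : nat, forall m n : nat,
        (N <= m)%N -> (N <= n)%N -> mdist (u m) (u n) < e) ->
    exists l : X, u @ \oo --> l.

Definition polish {R : realType} (X : pmetricType R) : Prop :=
  separable_space X /\ mcomplete X.

Definition is_coupling {R : realType} (X Y : pmetricType R)
  (mu : probability (borel X) R) (nu : probability (borel Y) R)
  (pi : probability (borel X * borel Y)%type R) : Prop :=
  (forall A : set (borel X), measurable A -> pi (A `*` [set: borel Y]) = mu A) /\
  (forall B : set (borel Y), measurable B -> pi ([set: borel X] `*` B) = nu B).

Definition cyclically_invariant {R : realType} (X Y : pmetricType R)
  (mu : probability (borel X) R) (nu : probability (borel Y) R)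
  (c : X * Y -> R) (eps : R)
  (pi : probability (borel X * borel Y)%type R) : Prop :=
  let P := (mu \x nu)%E in
  (forall A : set (borel X * borel Y)%type, measurable A ->
      (pi A = 0%E <-> P A = 0%E)) /\
  (* a version of the density dpi/dP with values in (0, oo) satisfying the
     cyclic identity *)
  exists f : (borel X * borel Y)%type -> R,
    measurable_fun [set: (borel X * borel Y)%type] f /\
    (forall z, 0 < f z) /\
    (forall A : set (borel X * borel Y)%type, measurable A ->
        pi A = (\int[P]_(z in A) (f z)%:E)%E) /\
    (forall (k : nat) (x : 'I_k -> X) (y : 'I_k -> Y),
        \prod_(i < k) f (x i, y i) =
        expR (- (eps^-1) * (\sum_(i < k) c (x i, y i)
                            - \sum_(i < k) c (x i, y (ordS i))))
        * \prod_(i < k) f (x i, y (ordS i))).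

Definition spt {R : realType} (X Y : pmetricType R)
  (pi : probability (borel X * borel Y)%type R) : set (X * Y) :=
  [set z | forall U : set (X * Y), open U -> U z -> (0 < pi U)%E].

Definition curve_length {R : realType} (X : pmetricType R) (gamma : R -> X)
  (a b : R) : \bar R :=
  ereal_sup [set v | exists (n : nat) (s : nat -> R),
     s 0%N = a /\ s n = b /\ (forall i, (i < n)%N -> s i <= s i.+1) /\
     v = (\sum_(i < n) mdist (gamma (s i)) (gamma (s i.+1)))%:E].

Definition arcwise_connected_finite {R : realType} (X : pmetricType R)
  (S : set X) : Prop :=
  forall x1 x2, S x1 -> S x2 ->
    exists gamma : R -> X,
      {within `[0, 1], continuous gamma} /\
      gamma 0 = x1 /\ gamma 1 = x2 /\
      (forall t, 0 <= t <= 1 -> S (gamma t)) /\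
      (curve_length gamma 0 1 < +oo)%E.

(* The function I(x, y), with (x_1, y_1) := (x, y) (index 0 here),
   k >= 2 written as k.+2, sigma a permutation of the k indices. *)
Definition Ifun {R : realType} (X Y : pmetricType R) (c : X * Y -> R)
  (Gamma : set (X * Y)) (x : X) (y : Y) : \bar R :=
  ereal_sup [set v | exists (k : nat) (xs : 'I_k.+2 -> X) (ys : 'I_k.+2 -> Y)
                       (sigma : {perm 'I_k.+2}),
     xs ord0 = x /\ ys ord0 = y /\
     (forall i : 'I_k.+2, i != ord0 -> Gamma (xs i, ys i)) /\
     v = (\sum_(i < k.+2) c (xs i, ys i)
          - \sum_(i < k.+2) c (xs i, ys (sigma i)))%:E].

(* Main.v *)
Require Import Defs.
From HB Require Import structures.
From mathcomp Require Import all_boot all_order all_algebra.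
From mathcomp Require Import all_classical all_reals all_analysis.
From mathcomp Require Import fingroup perm.
Import Order.TTheory GRing.Theory Num.Theory.
Import numFieldNormedType.Exports.
Local Open Scope classical_set_scope.
Local Open Scope ring_scope.

Lemma within_eps (R : realType) (X : pmetricType R) (g : R -> X) (A : set R)
  (t eps : R) : {within A, continuous g} -> A t -> 0 < eps ->
  exists2 r : R, 0 < r & forall u, A u -> `|t - u| < r -> mdist (g t) (g u) < eps.
Proof.
move=> /subspace_continuousP gc At e0.
have := gc t At (ball (g t) eps) (nbhsx_ballx _ _ e0).
rewrite /= /within /= => /nbhs_ballP [r r0 H].
exists r => // u Au tu.
have := H u; rewrite /ball /= => /(_ tu Au).
move=> hh; change (ball (g t) eps (g u)) in hh.
by move: hh; rewrite ballEmdist.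
Qed.
From mathcomp Require Import lra.

Lemma creep (R : realType) (X : pmetricType R) (g : R -> X) (d : R) :
  0 < d -> {within `[0, 1], continuous g} ->
  exists m (s : nat -> R), (0 < m)%N /\ [/\ s 0%N = 0, s m = 1,
    (forall i, (i < m)%N -> s i <= s i.+1), (forall i, 0 <= s i <= 1) &
    (forall i, (i < m)%N -> mdist (g (s i)) (g (s i.+1)) < d)].
Proof.
move=> d0 gc.
pose P t := 0 <= t <= 1 /\ exists m (s : nat -> R), [/\ s 0%N = 0, s m = t,
    (forall i, (i < m)%N -> s i <= s i.+1), (forall i, 0 <= s i <= 1) &
    (forall i, (i < m)%N -> mdist (g (s i)) (g (s i.+1)) < d)].
have P0 : P 0.
  split; first by rewrite lexx ler01.
  exists 0%N, (fun _ => 0); split => // i; by rewrite lexx ler01.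
have hs : has_sup P.
  split; first by exists 0.
  by exists 1 => t [/andP[_ ?] _].
set tau := sup P.
have tau0 : 0 <= tau := sup_upper_bound hs P0.
have tau1 : tau <= 1.
  by apply: sup_le_ub; [exists 0 | move=> t [/andP[_ ?] _]].
have tauI : `[0, 1]%classic tau by rewrite /= in_itv /= tau0 tau1.
have [r r0 hr] := @within_eps _ _ g _ tau (d / 2) gc tauI (divr_gt0 d0 (ltr0Sn _ 1)).
have [t Pt ht] := sup_adherent r0 hs.
rewrite -/tau in ht.
have tt : t <= tau := sup_upper_bound hs Pt.
case: Pt => /andP[t0 t1] [m [s [s0 sm smono sb sd]]].
pose tau' := if (tau + r / 2 <= 1) then tau + r / 2 else 1.
have [t'1 [t'2 [t'3 t'4]]] : [/\ tau' <= 1, tau' <= tau + r / 2, tau <= tau' &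
  (tau' = 1 \/ tau' = tau + r / 2)].
  rewrite /tau'; case: ifP => h.
  - split => //; [lra | by right].
  - move/negbT: h; rewrite -ltNge => h; split => //; [lra | by left].
have Ptau' : P tau'.
  split; first by apply/andP; split => //; lra.
  exists m.+1, (fun i => if (i <= m)%N then s i else tau'); split.
  - by rewrite leq0n.
  - by rewrite ltnn.
  - move=> i; rewrite ltnS; have [im|mi|->] := ltngtP i m => h.
    + by rewrite ?(ltnW im) ?im; apply: smono.
    + by [].
    + by rewrite ?leqnn ?ltnn sm; lra.
  - move=> i; case: ifP => _ //; apply/andP; split => //; lra.
  - move=> i; rewrite ltnS; have [im|mi|->] := ltngtP i m => h.
    + by rewrite ?(ltnW im) ?im; apply: sd.
    + by [].
    rewrite ?leqnn ?ltnn sm.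
    apply: (le_lt_trans (metric_triangle _ (g tau) _)).
    have h1 : mdist (g tau) (g t) < d / 2.
      apply: hr; first by rewrite /= in_itv /= t0 t1.
      rewrite ger0_norm; lra.
    have h2 : mdist (g tau) (g tau') < d / 2.
      apply: hr; first by rewrite /= in_itv /= t'1 andbT; lra.
      rewrite ler0_norm; lra.
    rewrite metric_sym; lra.
have : tau' <= tau := sup_upper_bound hs Ptau'.
move=> t'5.
have t'6 : tau' = 1 by case: t'4 => // h; lra.
case: Ptau' => _ [m' [s' [s'0 s'm s'mono s'b s'd]]].
exists m', s'; split; last by split => //; rewrite -t'6.
case: m' s'm {s'mono s'd} => // s'm; lra.
Qed.

Lemma Ifun_chain (R : realType) (X Y : pmetricType R) (c : X * Y -> R)
  (G : set (X * Y)) (T : X -> Y) (z : nat -> X) (m : nat) :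
  (0 < m)%N -> (forall i, (0 < i <= m)%N -> G (z i, T (z i))) ->
  ((c (z 0%N, T (z m)) - c (z m, T (z m))
    + \sum_(0 <= i < m) (c (z i.+1, T (z i.+1)) - c (z i, T (z i.+1))))%:E
   <= Ifun c G (z 0%N) (T (z m)))%E.
Proof.
case: m => // k _ hG.
pose ys := fun i : 'I_k.+2 => if i == ord0 then T (z k.+1) else T (z i).
pose sigma : {perm 'I_k.+2} := perm (@ordS_inj k.+2).
apply: ereal_sup_ubound; exists k, (fun i : 'I_k.+2 => z i), ys, sigma.
split => //; split; first by rewrite /ys eqxx.
split.
  move=> i i0; rewrite /ys (negbTE i0); apply: hG.
  by rewrite lt0n -(inj_eq val_inj) /= in i0 *; rewrite i0 -ltnS ltn_ord.
congr EFin.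
have e1 : \sum_(i < k.+2) c (z i, ys i) =
    c (z 0%N, T (z k.+1)) + \sum_(i < k.+1) c (z i.+1, T (z i.+1)).
  rewrite big_ord_recl /ys eqxx; congr (_ + _); apply: eq_bigr => i _.
have e2 : \sum_(i < k.+2) c (z i, ys (sigma i)) =
    \sum_(i < k.+1) c (z i, T (z i.+1)) + c (z k.+1, T (z k.+1)).
  rewrite big_ord_recr /=; congr (_ + _).
    apply: eq_bigr => i _; rewrite /ys permE.
    have -> : ordS (widen_ord (leqnSn k.+1) i) = lift ord0 i.
      by apply: val_inj; rewrite /= modn_small // ltnS.
    by [].
  rewrite /ys permE.
  have -> : ordS (@ord_max k.+1) = ord0 by apply: val_inj; rewrite /= modnn.
  by rewrite eqxx.
rewrite e1 e2 big_mkord.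
rewrite sumrB; lra.
Qed.

Theorem lemma4p10 (R : realType) (X Y : pmetricType R)
  (hX : polish X) (hY : polish Y)
  (mu : probability (borel X) R) (nu : probability (borel Y) R)
  (c : X * Y -> R) (c_ge0 : forall z, 0 <= c z) (c_cont : continuous c)
  (pi : R -> probability (borel X * borel Y)%type R)
  (hpi : forall eps : R, 0 < eps ->
     is_coupling mu nu (pi eps) /\ cyclically_invariant mu nu c eps (pi eps))
  (pistar : probability (borel X * borel Y)%type R)
  (hpistar : is_coupling mu nu pistar)
  (hweak : forall f : X * Y -> R, continuous f ->
     (exists M : R, forall z, `|f z| <= M) ->
     (fun eps : R => (\int[pi eps]_z (f z)%:E)%E) @ 0^'+ -->
       (\int[pistar]_z (f z)%:E)%E)
  (T : X -> Y)
  (hgraph : spt pistar =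
            [set z | (fst @` spt pistar) z.1 /\ z.2 = T z.1])
  (harc : arcwise_connected_finite (fst @` spt pistar))
  (hc : forall K : set X, compact K -> K `<=` fst @` spt pistar ->
     forall e : R, 0 < e -> exists2 delta : R, 0 < delta &
       forall x1 x2, K x1 -> K x2 -> mdist x1 x2 < delta ->
         `|c (x1, T x1) + c (x2, T x2) - c (x1, T x2) - c (x2, T x1)|
           <= e * mdist x1 x2)
  (x x' : X) (y y' : Y)
  (hx : (fst @` spt pistar) x) (hx' : (fst @` spt pistar) x')
  (hy : (snd @` spt pistar) y) (hy' : (snd @` spt pistar) y')
  (hx'y : spt pistar (x', y)) (hxy' : spt pistar (x, y')) :
  (Ifun c (spt pistar) x y + Ifun c (spt pistar) x' y' >=
     (c (x, y) + c (x', y') - c (x, y') - c (x', y))%:E)%E.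
Proof.
set G := spt pistar in hgraph harc hc hx hx' hy hy' hx'y hxy' *.
have /seteqP[h1 h2] := hgraph.
have hG : forall p, (fst @` G) p -> G (p, T p) by move=> p hp; apply: h2.
have hT : forall p q, G (p, q) -> q = T p by move=> p q /h1 [].
have ey := hT _ _ hx'y; have ey' := hT _ _ hxy'; subst y y'.
have [g [gc [g0 [g1 [gX gL]]]]] := harc x x' hx hx'.
set L := curve_length g 0 1 in gL.
have [B [B0 hB]] : exists B, 0 <= B /\ forall S, (S%:E <= L)%E -> S <= B.
  case: L gL => [l| |] //= _.
  - by exists `|l|; split => // S; rewrite lee_fin => /le_trans; apply; exact: ler_norm.
  - by exists 0; split => // S.
apply/lee_subgt0Pr => e e0.
pose e' := e / (B + 1).
have e'0 : 0 < e' by rewrite divr_gt0 // ltr_wpDl.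
have e'B : e' * B <= e.
  rewrite /e' mulrAC ler_pdivrMr ?ltr_wpDl //; rewrite ler_wpM2l //; lra.
pose K := g @` `[0, 1]%classic.
have cK : compact K by apply: continuous_compact gc _; exact: segment_compact.
have KX : K `<=` fst @` G.
  by move=> _ [t ht <-]; apply: gX; move: ht; rewrite /= in_itv.
have [d d0 hd] := hc K cK KX e' e'0.
have := @creep _ _ g d d0 gc.
move=> [m [s [m0 [s0 sm smono sb sd]]]].
pose z i := g (s i).
have zX : forall i, (fst @` G) (z i) by move=> i; apply: gX; exact: sb.
have zK : forall i, K (z i).
  move=> i; exists (s i); last by []. rewrite /= in_itv /=; exact: sb.
have I1 := @Ifun_chain _ _ _ c G T z m m0 (fun i _ => hG _ (zX i)).
pose w i := z (m - i)%N.
have I2 := @Ifun_chain _ _ _ c G T w m m0 (fun i _ => hG _ (zX (m - i)%N)).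
have ez0 : z 0%N = x by rewrite /z s0.
have ezm : z m = x' by rewrite /z sm.
have ew0 : w 0%N = x' by rewrite /w subn0.
have ewm : w m = x by rewrite /w subnn.
rewrite ez0 ezm in I1; rewrite ew0 ewm in I2.
apply: le_trans (leeD I1 I2).
rewrite -EFinB lee_fin.
have ew : \sum_(0 <= i < m) (c (w i.+1, T (w i.+1)) - c (w i, T (w i.+1))) =
    \sum_(0 <= i < m) (c (z i, T (z i)) - c (z i.+1, T (z i))).
  rewrite [RHS]big_nat_rev /=; apply: eq_big_nat => i /andP[_ im].
  by rewrite /w add0n -(subnSK im).
pose S := \sum_(i < m) mdist (z i) (z i.+1).
have SL : (S%:E <= L)%E.
  apply: ereal_sup_ubound; exists m, s; split => //; split => //; split => //.
have SB := hB _ SL.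
have hb : forall i, (0 <= i < m)%N -> - (e' * mdist (z i) (z i.+1)) <=
    (c (z i.+1, T (z i.+1)) - c (z i, T (z i.+1))) +
    (c (z i, T (z i)) - c (z i.+1, T (z i))).
  move=> i /andP[_ im].
  have := hd _ _ (zK i) (zK i.+1) (sd i im); rewrite ler_norml => /andP[h _].
  lra.
have hsum := ler_sum_nat hb.
rewrite sumrN -mulr_sumr big_split /= [X in - (e' * X)]big_mkord -/S in hsum.
have : e' * S <= e' * B by rewrite ler_wpM2l // ltW.
rewrite ew; lra.
Qed.
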